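(* For any reals $\underline{w},\overline{w},B$ with $0<\underline{w}\le\overline{w}\le B$, there exist a hospital $h$ with budget $B_h=B$, a finite set $X_h$ of contracts of $h$ whose minimum wage is $\underline{w}$ and maximum wage is $\overline{w}$, and an additive utility function $f_h$ on $X_h$ with nonnegative values, such that every choice function $\mathrm{Ch}_h:2^{X_h}\to2^{X_h}$ satisfying LAD and COM has $w_h(\mathrm{Ch}_h(X'))>\overline{w}\cdot(B-\overline{w})/\underline{w}$ for some $X'\subseteq X_h$.
   Context: A contract of hospital $h$ is $x=(d,h,w)$ with doctor $d$ and wage $x_W=w>0$. For $Y\subseteq X_h$, $w_h(Y)=\sum_{x\in Y}x_W$ and the additive utility is $f_h(Y)=\sum_{x\in Y}f_h(x)$. A choice function is a map $\mathrm{Ch}_h:2^{X_h}\to2^{X_h}$ with $\mathrm{Ch}_h(Y)\subseteq Y$. LAD: for all $Y''\subseteq Y'\subseteq X_h$, $|\mathrm{Ch}_h(Y'')|\le|\mathrm{Ch}_h(Y')|$. COM: for all $Y''\subseteq Y'\subseteq X_h$ with $w_h(Y'')\le\max\{B_h,w_h(\mathrm{Ch}_h(Y'))\}$, $f_h(\mathrm{Ch}_h(Y'))\ge f_h(Y'')$. *)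

(* Defs.v *)
From mathcomp Require Import all_boot all_order all_algebra.
From mathcomp Require Import reals.
Set Implicit Arguments. Unset Strict Implicit. Unset Printing Implicit Defensive.
Import Order.TTheory GRing.Theory Num.Theory.
Local Open Scope ring_scope.

(* Contracts of a single hospital h are elements of a finite type C (this is X_h);
   each contract x carries a doctor [doc x] and a wage [wage x]. *)
Section Defs.
Variables (R : realType) (C : finType).

Definition wsum (wage : C -> R) (Y : {set C}) : R := \sum_(x in Y) wage x.
Definition fsum (f : C -> R) (Y : {set C}) : R := \sum_(x in Y) f x.

Definition is_choice (Ch : {set C} -> {set C}) : Prop :=
  forall Y, Ch Y \subset Y.

Definition LAD (Ch : {set C} -> {set C}) : Prop :=
  forall Y2 Y1 : {set C}, Y2 \subset Y1 -> (#|Ch Y2| <= #|Ch Y1|)%N.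

Definition COM (B : R) (wage f : C -> R) (Ch : {set C} -> {set C}) : Prop :=
  forall Y2 Y1 : {set C}, Y2 \subset Y1 ->
    wsum wage Y2 <= Num.max B (wsum wage (Ch Y1)) ->
    fsum f Y2 <= fsum f (Ch Y1).
End Defs.

(* Main.v *)
Require Import Defs.
From mathcomp Require Import all_boot all_order all_algebra.
From mathcomp Require Import reals.
From mathcomp Require Import lra.
Import Order.TTheory GRing.Theory Num.Theory.
Local Open Scope ring_scope.

Lemma getk (R : realType) (wl B : R) : 0 < wl -> wl <= B ->
  exists k : nat, (0 < k)%N /\ k%:R * wl <= B /\ B < k.+1%:R * wl.
Proof.
move=> hl hB; have h0 : 0 <= B / wl by rewrite divr_ge0 ?(le_trans (ltW hl) hB) ?ltW.
exists (Num.truncn (B / wl)).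
have /andP[a b] := truncn_itv h0.
split; first by rewrite truncn_gt0 ler_pdivlMr // mul1r.
by rewrite -ler_pdivlMr // -ltr_pdivrMr // a b.
Qed.

Lemma sum_const_on (R : realType) (C : finType) (F : C -> R) (Y : {set C}) c :
  (forall x, x \in Y -> F x = c) -> \sum_(x in Y) F x = c *+ #|Y|.
Proof. by move=> h; rewrite (eq_bigr (fun _ => c)) // sumr_const. Qed.

Theorem theorem4 (R : realType) (wl wu B : R) :
  0 < wl -> wl <= wu -> wu <= B ->
  exists (C : finType) (hosp : nat) (contract : C -> nat * nat * R)
         (f : C -> R),
    let wage := fun x => (contract x).2 in
    injective contract /\
    (forall x, (contract x).1.2 = hosp) /\
    (forall x, 0 < wage x) /\
    ((exists x, wage x = wl) /\ (forall x, wl <= wage x)) /\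
    ((exists x, wage x = wu) /\ (forall x, wage x <= wu)) /\
    (forall x, 0 <= f x) /\
    forall Ch : {set C} -> {set C},
      is_choice Ch -> LAD Ch -> COM B wage f Ch ->
      exists X' : {set C}, wu * (B - wu) / wl < wsum wage (Ch X').
Proof.
move=> hl hlu huB.
have [k [k0 [hk1 hk2]]] := @getk R wl B hl (le_trans hlu huB).
pose C := (bool * 'I_k)%type.
pose w (x : C) : R := if x.1 then wu else wl.
pose f (x : C) : R := if x.1 then k.+1%:R else 1.
exists C, 0%N, (fun x => (pickle x, 0%N, w x)), f.
move=> wage /=; rewrite /wage /= {wage}.
have i0 : 'I_k := Ordinal k0.
have wpos : 0 < wu by apply: lt_le_trans hlu.
split; first by move=> x y /(congr1 (fun p => p.1.1)) /= /(pcan_inj pickleK).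
split; first by [].
split; first by move=> [[] i]; rewrite /w.
split; first by split; [exists (false, i0) | move=> [[] i]; rewrite /w].
split; first by split; [exists (true, i0) | move=> [[] i]; rewrite /w].
split; first by move=> [[] i]; rewrite /f ?ler0n.
move=> Ch hC hLAD hCOM.
pose H : {set C} := setX [set true] setT.
pose L : {set C} := setX [set false] setT.
have cH : #|H| = k by rewrite cardsX cards1 cardsT card_ord mul1n.
have cL : #|L| = k by rewrite cardsX cards1 cardsT card_ord mul1n.
have inH x : (x \in H) = x.1 by case: x => [[] i]; rewrite !inE.
have inL x : (x \in L) = ~~ x.1 by case: x => [[] i]; rewrite !inE.
have wH (Y : {set C}) : Y \subset H -> wsum w Y = wu *+ #|Y|.
  by move=> /subsetP hY; apply: sum_const_on => x /hY; rewrite inH /w => ->.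
have fH (Y : {set C}) : Y \subset H -> fsum f Y = k.+1%:R *+ #|Y|.
  by move=> /subsetP hY; apply: sum_const_on => x /hY; rewrite inH /f => ->.
have wL (Y : {set C}) : Y \subset L -> wsum w Y = wl *+ #|Y|.
  by move=> /subsetP hY; apply: sum_const_on => x /hY; rewrite inL /w => /negbTE ->.
have fL (Y : {set C}) : Y \subset L -> fsum f Y = 1 *+ #|Y|.
  by move=> /subsetP hY; apply: sum_const_on => x /hY; rewrite inL /f => /negbTE ->.
have h1 : (k <= #|Ch L|)%N.
  have := hCOM L L (subxx _).
  rewrite wL // fL ?hC // fL // cL -(ler_nat R).
  apply; rewrite le_max -mulr_natl hk1 //.
have h2 : (k <= #|Ch setT|)%N by apply: leq_trans h1 (hLAD _ _ (subsetT _)).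
exists setT.
set S := Ch setT in h2 *.
have SHsub : S :&: H \subset H by apply: subsetIr.
have SLsub : S :\: H \subset L.
  by apply/subsetP => x; rewrite inE inH inL => /andP[].
set t := #|S :&: H|. set s := #|S :\: H|.
have hts : (k <= t + s)%N by rewrite /t /s cardsID.
have hsk : (s <= k)%N by rewrite -cL subset_leq_card.
have htk : (t <= k)%N by rewrite -cH subset_leq_card.
have eW : wsum w S = wu * t%:R + wl * s%:R.
  by rewrite /wsum (big_setID H) /= -!/(wsum _ _) wH // wL // -[wu *+ _]mulr_natr -[wl *+ _]mulr_natr.
have eF : fsum f S = k.+1%:R * t%:R + s%:R.
  by rewrite /fsum (big_setID H) /= -!/(fsum _ _) fH // fL // -[k.+1%:R *+ _]mulr_natr.
rewrite eW ltr_pdivrMr //.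
have hts' : k%:R <= t%:R + s%:R :> R by rewrite -natrD ler_nat.
have s0 : 0 <= s%:R :> R by rewrite ler0n.
have t0 : 0 <= t%:R :> R by rewrite ler0n.
have key : s%:R * wl < wu -> wu * (B - wu) < (wu * t%:R + wl * s%:R) * wl.
  move=> hs.
  have e1 : (k%:R - s%:R) * wu * wl <= t%:R * wu * wl.
    by rewrite -!mulrA; apply: ler_wpM2r; [rewrite mulr_ge0 ?ltW | lra].
  have e2 : 0 <= (wu - wl) * (wu - s%:R * wl) by apply: mulr_ge0; rewrite subr_ge0 // ltW.
  have e3 : wu * B < wu * (k.+1%:R * wl) by rewrite ltr_pM2l.
  rewrite -natr1 in e3.
  lra.
have e3 : wu * B < wu * (k%:R * wl + wl).
  by rewrite ltr_pM2l // -[X in _ * wl + X]mul1r -mulrDl natr1.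
have [tk|tk] := leqP k t.
  have -> : t = k by apply/eqP; rewrite eqn_leq htk tk.
  have e4 : wu * wl <= wu * wu by rewrite ler_pM2l.
  have e5 : 0 <= wl * s%:R * wl by rewrite !mulr_ge0 // ltW.
  lra.
apply: key; rewrite ltNge; apply/negP => hs.
have : ~~ (H \subset S :&: H).
  by apply/negP => /subset_leq_card; rewrite cH leqNgt tk.
case/subsetPn => y yH yS.
have Y2H : y |: (S :&: H) \subset H by rewrite subUset sub1set yH SHsub.
have := hCOM (y |: (S :&: H)) setT (subsetT _).
rewrite wH // fH // cardsU1 yS /= -/S eW eF -[wu *+ _]mulr_natr -[k.+1%:R *+ _]mulr_natr.
have -> : (1 + t)%:R = t%:R + 1 :> R by rewrite natrD addrC.
have hsk' : s%:R <= k%:R :> R by rewrite ler_nat.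
have hW : wu * (t%:R + 1) <= Num.max B (wu * t%:R + wl * s%:R).
  by rewrite le_max; apply/orP; right; lra.
move=> /(_ hW); lra.
Qed.
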